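(* Fix finite-dimensional $\mathcal H_2,\mathcal H_1$, an integer $M\ge1$ and an integer $1\le r\le\dim\mathcal H_1$. Then either for every density operator $\rho$ on $\mathcal H_1$ of rank $r$ there exists an extremal quantum $1$-tester with $M$ outcomes and normalization $I_2\otimes\rho$, or for no density operator $\rho$ of rank $r$ does such an extremal tester exist.
   Context: A quantum $1$-tester with $M$ outcomes is a family of positive operators $\{T_i\}_{i=1}^M$ on $\mathcal H_2\otimes\mathcal H_1$ with $\sum_iT_i=I_2\otimes\rho$ for a density operator $\rho$ on $\mathcal H_1$ (its normalization); extremal means an extreme point of the convex set of all such testers with $M$ outcomes. *)

(* Defs.v *)
(* finite-dimensional Hilbert spaces are C^d, with C := algC. *)
From HB Require Import structures.
From mathcomp Require Import all_boot all_order all_algebra all_field.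
Set Implicit Arguments. Unset Strict Implicit. Unset Printing Implicit Defensive.
Import Order.TTheory GRing.Theory Num.Theory.
Local Open Scope ring_scope.

Definition adjmx (m n : nat) (A : 'M[algC]_(m, n)) : 'M[algC]_(n, m) :=
  map_mx Num.conj (A^T).

Definition psd (n : nat) (A : 'M[algC]_n) : Prop :=
  adjmx A = A /\ forall v : 'cV[algC]_n, 0 <= (adjmx v *m A *m v) 0 0.

Definition density (n : nat) (rho : 'M[algC]_n) : Prop :=
  psd rho /\ \tr rho = 1.

(* Kronecker (tensor) product A (x) B on C^m (x) C^n = C^(m*n),
   with basis e_i (x) f_j indexed by mxvec_index i j. *)
Definition kronmx (m n : nat) (A : 'M[algC]_m) (B : 'M[algC]_n) : 'M[algC]_(m * n) :=
  \matrix_(k, l) \sum_(i : 'I_m) \sum_(j : 'I_n) \sum_(i' : 'I_m) \sum_(j' : 'I_n)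
     (if (mxvec_index i j == k) && (mxvec_index i' j' == l)
      then A i i' * B j j' else 0).

(* {T_i} is a quantum 1-tester with M outcomes on H2 (x) H1 (dims d2, d1)
   with normalization I_2 (x) rho *)
Definition tester_with (d2 d1 M : nat) (rho : 'M[algC]_d1)
    (T : 'I_M -> 'M[algC]_(d2 * d1)) : Prop :=
  density rho /\ (forall i, psd (T i)) /\
  \sum_(i < M) T i = kronmx (1%:M : 'M[algC]_d2) rho.

Definition tester (d2 d1 M : nat) (T : 'I_M -> 'M[algC]_(d2 * d1)) : Prop :=
  exists rho : 'M[algC]_d1, tester_with rho T.

Definition extremal_tester (d2 d1 M : nat) (T : 'I_M -> 'M[algC]_(d2 * d1)) : Prop :=
  tester T /\
  forall (T1 T2 : 'I_M -> 'M[algC]_(d2 * d1)) (t : algC),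
    tester T1 -> tester T2 -> 0 < t < 1 ->
    (forall i, T i = t *: T1 i + (1 - t) *: T2 i) ->
    (forall i, T1 i = T i /\ T2 i = T i).

(* Main.v *)
Require Import Defs.
From HB Require Import structures.
From mathcomp Require Import all_boot all_order all_algebra all_field all_fingroup.
From Stdlib Require Import Classical.
Import Order.TTheory GRing.Theory Num.Theory.
Local Open Scope ring_scope.
Set Implicit Arguments. Unset Strict Implicit.

Lemma adjmxK m n (A : 'M[algC]_(m, n)) : adjmx (adjmx A) = A.
Proof. by apply/matrixP=> i j; rewrite !mxE conjCK. Qed.

Lemma adjmxM m n p (A : 'M[algC]_(m, n)) (B : 'M[algC]_(n, p)) :
  adjmx (A *m B) = adjmx B *m adjmx A.
Proof.
apply/matrixP=> i j; rewrite !mxE rmorph_sum; apply: eq_bigr => k _.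
by rewrite !mxE rmorphM mulrC.
Qed.

Lemma adjmxD m n (A B : 'M[algC]_(m, n)) : adjmx (A + B) = adjmx A + adjmx B.
Proof. by apply/matrixP=> i j; rewrite !mxE rmorphD. Qed.

Lemma adjmxZ m n a (A : 'M[algC]_(m, n)) : adjmx (a *: A) = a^* *: adjmx A.
Proof. by apply/matrixP=> i j; rewrite !mxE rmorphM. Qed.

Lemma adjmx1 n : adjmx (1%:M : 'M[algC]_n) = 1%:M.
Proof. by apply/matrixP=> i j; rewrite !mxE eq_sym; case: (i == j); rewrite /= ?rmorph1 ?rmorph0. Qed.

Lemma adjmx0 m n : adjmx (0 : 'M[algC]_(m,n)) = 0.
Proof. by apply/matrixP=> i j; rewrite !mxE rmorph0. Qed.

Lemma adjmx_sum m n (I : finType) (F : I -> 'M[algC]_(m, n)) :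
  adjmx (\sum_i F i) = \sum_i adjmx (F i).
Proof.
apply/matrixP=> i j; rewrite !mxE summxE rmorph_sum summxE.
by apply: eq_bigr => k _; rewrite !mxE.
Qed.

Lemma psd_conj m n (K : 'M[algC]_(m, n)) (X : 'M[algC]_n) :
  psd X -> psd (K *m X *m adjmx K).
Proof.
move=> [hX pX]; split.
  by rewrite !adjmxM adjmxK hX mulmxA.
move=> v; have := pX (adjmx K *m v).
by rewrite adjmxM adjmxK !mulmxA.
Qed.

Lemma psdD n (A B : 'M[algC]_n) : psd A -> psd B -> psd (A + B).
Proof.
move=> [hA pA] [hB pB]; split; first by rewrite adjmxD hA hB.
move=> v; rewrite mulmxDr mulmxDl mxE; exact: addr_ge0.
Qed.

Lemma psdZ n c (A : 'M[algC]_n) : 0 <= c -> psd A -> psd (c *: A).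
Proof.
move=> c0 [hA pA]; split.
  by rewrite adjmxZ hA conj_Creal ?ger0_real.
move=> v; rewrite -scalemxAr -scalemxAl mxE; exact: mulr_ge0.
Qed.

Lemma psd0 n : psd (0 : 'M[algC]_n).
Proof. by split; [rewrite adjmx0 | move=> v; rewrite mulmx0 mul0mx mxE]. Qed.

Lemma psd_sum n (I : finType) (F : I -> 'M[algC]_n) :
  (forall i, psd (F i)) -> psd (\sum_i F i).
Proof.
move=> hF; elim/big_rec: _ => [|i x _ hx]; first exact: psd0.
exact: psdD.
Qed.

Lemma rank_unit_l m n (P : 'M[algC]_m) (A : 'M[algC]_(m, n)) :
  P \in unitmx -> \rank (P *m A) = \rank A.
Proof.
move=> Pu; apply/eqP; rewrite eqn_leq mxrankM_maxr /=.
by rewrite -{1}(mulKmx Pu A) mxrankM_maxr.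
Qed.

Lemma rank_unit_r m n (P : 'M[algC]_n) (A : 'M[algC]_(m, n)) :
  P \in unitmx -> \rank (A *m P) = \rank A.
Proof. by move=> Pu; rewrite mxrankMfree // row_free_unit. Qed.

Lemma psd_spectral n (A : 'M[algC]_n) : psd A ->
  exists (U : 'M[algC]_n) (l : 'rV[algC]_n),
    [/\ U *m adjmx U = 1%:M, adjmx U *m U = 1%:M, forall i, 0 <= l 0 i &
      A = adjmx U *m diag_mx l *m U].
Proof.
move=> [hA pA].
have herm : A \is hermsymmx.
  by apply/is_hermitianmxP; rewrite expr0 scale1r -{1}hA.
have /orthomx_spectralP Ae := hermitian_normalmx herm.
set U := spectralmx A in Ae; set l := spectral_diag A in Ae.
have Uu : U \is unitarymx := spectral_unitarymx A.
have Uunit : U \in unitmx := spectral_unit A.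
have adjU : adjmx U = invmx U by rewrite invmx_unitary.
exists U, l; split.
- by rewrite adjU mulmxV.
- by rewrite adjU mulVmx.
- move=> i.
  have D : U *m A *m adjmx U = diag_mx l.
    by rewrite Ae adjU !mulmxA mulmxV // mul1mx -mulmxA mulmxV // mulmx1.
  have := pA (adjmx (row i U)).
  rewrite adjmxK.
  have -> : (row i U *m A *m adjmx (row i U)) 0 0 = (U *m A *m adjmx U) i i.
    rewrite !mxE; apply: eq_bigr => k _; rewrite !mxE; congr (_ * _).
    by apply: eq_bigr => j _; rewrite !mxE.
  by rewrite D !mxE eqxx mulr1n.
- by rewrite adjU.
Qed.

Lemma psd_tr0 n (A : 'M[algC]_n) : psd A -> \tr A = 0 -> A = 0.
Proof.
move=> /psd_spectral [U [l [UU1 U1 l0 ->]]].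
rewrite mxtrace_mulC mulmxA UU1 mul1mx mxtrace_diag => s0.
have l00 : l = 0.
  apply/rowP=> i; rewrite mxE.
  by apply: (psumr_eq0P _ s0) => // j _.
by rewrite l00 raddf0 mulmx0 mul0mx.
Qed.

Lemma psd_tr_ge0 n (A : 'M[algC]_n) : psd A -> 0 <= \tr A.
Proof.
move=> /psd_spectral [U [l [UU1 U1 l0 ->]]].
rewrite mxtrace_mulC mulmxA UU1 mul1mx mxtrace_diag.
by apply: sumr_ge0 => i _.
Qed.

Lemma bool_sort n (b : 'I_n -> bool) :
  exists k, exists p : 'S_n, (k <= n)%N /\ forall i, b (p i) = (i < k)%N.
Proof.
pose t := [tuple b i | i < n].
pose k := count id t.
have kn : (k <= n)%N by have := count_size id t; rewrite size_tuple.
pose s := nseq k true ++ nseq (n - k) false.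
have ps : perm_eq s t.
  rewrite perm_sym -(perm_filterC id t) /s.
  have -> : [seq x <- t | id x] = nseq k true.
    by rewrite /k -size_filter; apply/all_pred1P; rewrite (eq_all (a2 := id)) ?filter_all // => x; case: x.
  have -> : [seq x <- t | predC id x] = nseq (n - k) false.
    have -> : (n - k = size [seq x <- t | predC id x])%N.
      by rewrite size_filter; apply/eqP; rewrite -(eqn_add2l k) subnKC // /k count_predC size_tuple.
    by apply/all_pred1P; rewrite (eq_all (a2 := predC id)) ?filter_all // => x; case: x.
  exact: perm_refl.
have [p hp] := tuple_permP ps.
exists k, p; split=> // i.
have := congr1 (fun x => nth false x i) hp.
rewrite /= (nth_map i) ?size_enum_ord ?ltn_ord //.
rewrite nth_cat size_nseq !nth_nseq.
rewrite tnth_mktuple nth_ord_enum.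
move=> <-; case: (i < k)%N => //; by case: ifP.
Qed.

Lemma adjmx_diag n (d : 'rV[algC]_n) : adjmx (diag_mx d) = diag_mx (\row_i (d 0 i)^*).
Proof.
apply/matrixP=> i j; rewrite !mxE eq_sym; case: eqP => [->|_]; rewrite /= ?mulr1n ?mulr0n ?rmorph0 //.
Qed.

Lemma adjmx_perm n (p : 'S_n) : adjmx (perm_mx p : 'M[algC]_n) = perm_mx p^-1.
Proof. by rewrite /adjmx tr_perm_mx map_perm_mx. Qed.

Lemma psd_pid n (A : 'M[algC]_n) : psd A ->
  exists2 P : 'M[algC]_n, P \in unitmx & P *m A *m adjmx P = pid_mx (\rank A).
Proof.
move=> hA; have [U [l [UU1 U1 l0 Ae]]] := psd_spectral hA.
have [k [p [kn hb]]] := bool_sort (fun i => l 0 i != 0).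
pose dv := \row_i (if l 0 i != 0 then (sqrtC (l 0 i))^-1 else 1).
pose P := perm_mx p *m diag_mx dv *m U.
have Uu : U \in unitmx by case: (mulmx1_unit UU1).
have Pu : P \in unitmx.
  rewrite !unitmx_mul unitmx_perm Uu andbT unitmxE det_diag unitfE.
  apply/prodf_neq0 => i _; rewrite mxE; case: ifP => li; last by rewrite oner_eq0.
  by rewrite invr_eq0 sqrtC_eq0 li.
have key : P *m A *m adjmx P = pid_mx k.
  have mid : diag_mx dv *m (U *m A *m adjmx U) *m adjmx (diag_mx dv)
           = diag_mx (\row_i (l 0 i != 0)%:R).
    have E : U *m A *m adjmx U = diag_mx l by rewrite Ae !mulmxA UU1 mul1mx -mulmxA UU1 mulmx1.
    rewrite E adjmx_diag !mulmx_diag.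
    congr diag_mx; apply/rowP => x; rewrite !mxE.
    case: ifP => hx; last by move/negbFE: hx => /eqP ->; rewrite mulr0 mul0r.
    have sr : sqrtC (l 0 x) \is Num.real by apply: sqrtC_real.
    have s0 : sqrtC (l 0 x) != 0 by rewrite sqrtC_eq0.
    rewrite (conj_Creal (_ : _ \is Num.real)); last by rewrite rpredV.
    rewrite -{2}(sqrtCK (l 0 x)) expr2 mulrA mulVf // mul1r mulfV //.
  have -> : P *m A *m adjmx P
      = perm_mx p *m (diag_mx dv *m (U *m A *m adjmx U) *m adjmx (diag_mx dv))
        *m adjmx (perm_mx p).
    by rewrite /P !adjmxM !mulmxA.
  rewrite mid adjmx_perm -col_permE -row_permE.
  apply/matrixP => i j; rewrite !mxE hb (inj_eq perm_inj).
  by case: (i < k)%N; rewrite ?andbT ?andbF ?mul0rn //; case: (_ == _).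

have Pau : adjmx P \in unitmx.
  have : adjmx P *m adjmx (invmx P) = 1%:M by rewrite -adjmxM mulVmx // adjmx1.
  by case/mulmx1_unit.
exists P => //.
have rk : \rank A = k.
  by rewrite -(@rank_pid_mx algC n n k kn kn) -key rank_unit_r // rank_unit_l.
by rewrite rk key.
Qed.

Lemma psd_congr n (A B : 'M[algC]_n) : psd A -> psd B -> \rank A = \rank B ->
  exists2 S, S \in unitmx & S *m A *m adjmx S = B.
Proof.
move=> hA hB rAB.
have [P Pu PA] := psd_pid hA; have [Q Qu QB] := psd_pid hB.
exists (invmx Q *m P); first by rewrite unitmx_mul unitmx_inv Qu.
have -> : invmx Q *m P *m A *m adjmx (invmx Q *m P)
    = invmx Q *m (P *m A *m adjmx P) *m adjmx (invmx Q) by rewrite adjmxM !mulmxA.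
rewrite PA rAB -QB !mulmxA mulVmx // mul1mx -mulmxA -adjmxM mulVmx // adjmx1 mulmx1.
done.
Qed.

Lemma sum1_if (I : finType) (i0 : I) (F : I -> algC) :
  (forall a, a != i0 -> F a = 0) -> \sum_a F a = F i0.
Proof. by move=> h; rewrite (bigD1 i0) //= big1 ?addr0. Qed.

Lemma mxvec_index_eq m n (i i' : 'I_m) (j j' : 'I_n) :
  (mxvec_index i j == mxvec_index i' j') = (i == i') && (j == j').
Proof. by rewrite /mxvec_index (inj_eq (@cast_ord_inj _ _ _)) (inj_eq enum_rank_inj). Qed.

Lemma kronE m n (A : 'M[algC]_m) (B : 'M[algC]_n) i j i' j' :
  kronmx A B (mxvec_index i j) (mxvec_index i' j') = A i i' * B j j'.
Proof.
rewrite mxE.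
rewrite (@sum1_if _ i) => [|a ha]; last first.
  by apply: big1 => b _; apply: big1 => c _; apply: big1 => d _;
     rewrite mxvec_index_eq (negbTE ha).
rewrite (@sum1_if _ j) => [|b hb]; last first.
  by apply: big1 => c _; apply: big1 => d _;
     rewrite mxvec_index_eq (negbTE hb) andbF.
rewrite (@sum1_if _ i') => [|c hc]; last first.
  by apply: big1 => d _; rewrite !mxvec_index_eq (negbTE hc) /= andbF.
rewrite (@sum1_if _ j') => [|d hd]; last first.
  by rewrite !mxvec_index_eq (negbTE hd) /= !andbF.
by rewrite !eqxx.
Qed.

Lemma sum_mxvec m n (F : 'I_(m * n) -> algC) :
  \sum_k F k = \sum_i \sum_j F (mxvec_index i j).
Proof.
rewrite (reindex _ (curry_mxvec_bij _ _)) /= pair_big /=.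
by apply: eq_bigr => -[i j] _.
Qed.

Lemma kronM m n (A C : 'M[algC]_m) (B D : 'M[algC]_n) :
  kronmx A B *m kronmx C D = kronmx (A *m C) (B *m D).
Proof.
apply/matrixP => k l; case/mxvec_indexP: k => i j; case/mxvec_indexP: l => i' j'.
rewrite mxE sum_mxvec kronE !mxE big_distrl /=; apply: eq_bigr => a _.
rewrite big_distrr /=; apply: eq_bigr => b _.
by rewrite !kronE mulrACA.
Qed.

Lemma kron_adj m n (A : 'M[algC]_m) (B : 'M[algC]_n) :
  adjmx (kronmx A B) = kronmx (adjmx A) (adjmx B).
Proof.
apply/matrixP => k l; case/mxvec_indexP: k => i j; case/mxvec_indexP: l => i' j'.
by rewrite kronE /adjmx [in LHS]mxE [in LHS]mxE kronE !mxE rmorphM.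
Qed.

Lemma kron11 m n : kronmx (1%:M : 'M[algC]_m) (1%:M : 'M[algC]_n) = 1%:M.
Proof.
apply/matrixP => k l; case/mxvec_indexP: k => i j; case/mxvec_indexP: l => i' j'.
rewrite kronE !mxE mxvec_index_eq.
by case: (i == i'); case: (j == j'); rewrite ?mulr1 ?mulr0.
Qed.

Lemma kronD m n (A : 'M[algC]_m) (B C : 'M[algC]_n) :
  kronmx A (B + C) = kronmx A B + kronmx A C.
Proof.
apply/matrixP => k l; case/mxvec_indexP: k => i j; case/mxvec_indexP: l => i' j'.
by rewrite [RHS]mxE !kronE mxE mulrDr.
Qed.

Lemma kronZ m n (A : 'M[algC]_m) c (B : 'M[algC]_n) :
  kronmx A (c *: B) = c *: kronmx A B.
Proof.
apply/matrixP => k l; case/mxvec_indexP: k => i j; case/mxvec_indexP: l => i' j'.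
by rewrite [RHS]mxE !kronE mxE mulrCA.
Qed.

Lemma kron_inj m n (X Y : 'M[algC]_n) : (0 < m)%N ->
  kronmx (1%:M : 'M[algC]_m) X = kronmx 1%:M Y -> X = Y.
Proof.
move=> m0 e; apply/matrixP => j j'.
have := congr1 (fun M : 'M[algC]_(m * n) => M (mxvec_index (Ordinal m0) j) (mxvec_index (Ordinal m0) j')) e.
by rewrite /= !kronE !mxE eqxx !mul1r.
Qed.

Lemma conj_sum m n (K : 'M[algC]_(m, n)) (I : finType) (F : I -> 'M[algC]_n) :
  K *m (\sum_i F i) *m adjmx K = \sum_i (K *m F i *m adjmx K).
Proof. by rewrite mulmx_sumr mulmx_suml. Qed.

Lemma conj_kron d2 d1 (Z Y : 'M[algC]_d1) :
  kronmx (1%:M : 'M[algC]_d2) Z *m kronmx 1%:M Y *m adjmx (kronmx 1%:M Z)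
  = kronmx (1%:M : 'M[algC]_d2) (Z *m Y *m adjmx Z).
Proof. by rewrite kron_adj adjmx1 !kronM !mulmx1. Qed.

Lemma tester_conj d2 d1 M (Z : 'M[algC]_d1) rho (T : 'I_M -> 'M[algC]_(d2 * d1)) :
  tester_with rho T -> density (Z *m rho *m adjmx Z) ->
  tester_with (Z *m rho *m adjmx Z)
    (fun i => kronmx 1%:M Z *m T i *m adjmx (kronmx 1%:M Z)).
Proof.
move=> [_ [pT sT]] dZ; split=> //; split.
  by move=> i; apply: psd_conj.
by rewrite -conj_sum sT conj_kron.
Qed.

Lemma scale_one d2 d1 M (c : algC) sig sig' (X X' : 'I_M -> 'M[algC]_(d2 * d1)) :
  (0 < d2)%N -> (forall i, X' i = c *: X i) ->
  tester_with sig X -> tester_with sig' X' -> c = 1.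
Proof.
move=> d2p hX [[_ ts] [_ sX]] [[_ ts'] [_ sX']].
have : sig' = c *: sig.
  apply: (kron_inj d2p); rewrite -sX' kronZ -sX scaler_sumr.
  by apply: eq_bigr => i _; rewrite hX.
by move=> e; move: ts'; rewrite e mxtraceZ ts mulr1.
Qed.

Lemma transfer d2 d1 M (S : 'M[algC]_d1) rho sig (T : 'I_M -> 'M[algC]_(d2 * d1)) :
  (0 < d2)%N -> S \in unitmx -> density sig -> S *m rho *m adjmx S = sig ->
  extremal_tester T -> tester_with rho T ->
  let T' := fun i => kronmx 1%:M S *m T i *m adjmx (kronmx 1%:M S) in
  extremal_tester T' /\ tester_with sig T'.
Proof.
move=> d2p Su dsig hS [_ extT] twT T'.
have tw' : tester_with sig T' by rewrite -hS; apply: tester_conj => //; rewrite hS.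
split=> //; split; first by exists sig.
pose K := kronmx (1%:M : 'M[algC]_d2) S.
pose K' := kronmx (1%:M : 'M[algC]_d2) (invmx S).
have KK' : K *m K' = 1%:M by rewrite kronM mulmx1 mulmxV // kron11.
have K'K : K' *m K = 1%:M by rewrite kronM mulmx1 mulVmx // kron11.
have aKK' : adjmx K' *m adjmx K = 1%:M by rewrite -adjmxM KK' adjmx1.
have aK'K : adjmx K *m adjmx K' = 1%:M by rewrite -adjmxM K'K adjmx1.
have back : forall X, K' *m (K *m X *m adjmx K) *m adjmx K' = X.
  by move=> X; rewrite !mulmxA K'K mul1mx -mulmxA aK'K mulmx1.
have fwd : forall X, K *m (K' *m X *m adjmx K') *m adjmx K = X.
  by move=> X; rewrite !mulmxA KK' mul1mx -mulmxA aKK' mulmx1.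
move=> T1' T2' t [s1 tw1] [s2 tw2] /andP[t0 t1] dec.
pose r1 := invmx S *m s1 *m adjmx (invmx S).
pose r2 := invmx S *m s2 *m adjmx (invmx S).
pose T1 := fun i => K' *m T1' i *m adjmx K'.
pose T2 := fun i => K' *m T2' i *m adjmx K'.
have hs1 : S *m r1 *m adjmx S = s1.
  by rewrite /r1 !mulmxA mulmxV // mul1mx -mulmxA -adjmxM mulmxV // adjmx1 mulmx1.
have hs2 : S *m r2 *m adjmx S = s2.
  by rewrite /r2 !mulmxA mulmxV // mul1mx -mulmxA -adjmxM mulmxV // adjmx1 mulmx1.
have [[ps1 trs1] [_ sum1']] := tw1.
have [[ps2 trs2] [_ sum2']] := tw2.
have pr1 : psd r1 by apply: psd_conj.
have pr2 : psd r2 by apply: psd_conj.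
have pT1 : forall i, psd (T1 i) by move=> i; apply: psd_conj; case: tw1 => _ [].
have pT2 : forall i, psd (T2 i) by move=> i; apply: psd_conj; case: tw2 => _ [].
have sum1 : \sum_i T1 i = kronmx 1%:M r1 by rewrite -conj_sum sum1' conj_kron.
have sum2 : \sum_i T2 i = kronmx 1%:M r2 by rewrite -conj_sum sum2' conj_kron.
have decT : forall i, T i = t *: T1 i + (1 - t) *: T2 i.
  move=> i; rewrite -(back (T i)).
  have -> : K *m T i *m adjmx K = T' i by [].
  by rewrite dec mulmxDr mulmxDl -!scalemxAr -!scalemxAl.
have [[prho trho] [_ sumT]] := twT.
have rdec : rho = t *: r1 + (1 - t) *: r2.
  apply: (kron_inj d2p); rewrite kronD !kronZ -sumT -sum1 -sum2 !scaler_sumr -big_split.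
  by apply: eq_bigr => i _; rewrite decT.
pose c1 := \tr r1; pose c2 := \tr r2.
have c1ge : 0 <= c1 by apply: psd_tr_ge0.
have c2ge : 0 <= c2 by apply: psd_tr_ge0.
have c1n0 : c1 != 0.
  apply/eqP => e; have r10 := psd_tr0 pr1 e.
  by move: trs1; rewrite -hs1 r10 mulmx0 mul0mx mxtrace0 => /eqP; rewrite eq_sym oner_eq0.
have c2n0 : c2 != 0.
  apply/eqP => e; have r20 := psd_tr0 pr2 e.
  by move: trs2; rewrite -hs2 r20 mulmx0 mul0mx mxtrace0 => /eqP; rewrite eq_sym oner_eq0.
have c1p : 0 < c1 by rewrite lt_def c1n0.
have c2p : 0 < c2 by rewrite lt_def c2n0.
have ctr : t * c1 + (1 - t) * c2 = 1.
  by move: trho; rewrite rdec mxtraceD !mxtraceZ.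
pose N1 := fun i => c1^-1 *: T1 i.
pose N2 := fun i => c2^-1 *: T2 i.
have twN1 : tester_with (c1^-1 *: r1) N1.
  split; first split.
  - by apply: psdZ => //; rewrite invr_ge0.
  - by rewrite mxtraceZ mulVf.
  split; first by move=> i; apply: psdZ => //; rewrite invr_ge0.
  by rewrite kronZ -sum1 scaler_sumr.
have twN2 : tester_with (c2^-1 *: r2) N2.
  split; first split.
  - by apply: psdZ => //; rewrite invr_ge0.
  - by rewrite mxtraceZ mulVf.
  split; first by move=> i; apply: psdZ => //; rewrite invr_ge0.
  by rewrite kronZ -sum2 scaler_sumr.
have s0 : 0 < t * c1 by rewrite mulr_gt0.
have s1' : t * c1 < 1.
  rewrite -ctr ltrDl mulr_gt0 //; by rewrite subr_gt0.
have decN : forall i, T i = (t * c1) *: N1 i + (1 - t * c1) *: N2 i.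
  move=> i; rewrite decT /N1 /N2 !scalerA -mulrA mulfV // mulr1.
  have e : 1 - t * c1 = (1 - t) * c2 by rewrite -{1}ctr (addrC (t * c1)) addrK.
  by rewrite e -mulrA mulfV // mulr1.
have [eN1 eN2] : (forall i, N1 i = T i) /\ (forall i, N2 i = T i).
  split=> i; have := extT N1 N2 (t * c1) (ex_intro (fun r => tester_with r N1) _ twN1) (ex_intro (fun r => tester_with r N2) _ twN2)
      (introT andP (conj s0 s1')) decN i; by case.
have eT1 : forall i, T1' i = c1 *: T' i.
  move=> i; rewrite -(fwd (T1' i)) -/(T1 i).
  have -> : T1 i = c1 *: N1 i by rewrite /N1 scalerA mulfV // scale1r.
  by rewrite eN1 -scalemxAr -scalemxAl.
have eT2 : forall i, T2' i = c2 *: T' i.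
  move=> i; rewrite -(fwd (T2' i)) -/(T2 i).
  have -> : T2 i = c2 *: N2 i by rewrite /N2 scalerA mulfV // scale1r.
  by rewrite eN2 -scalemxAr -scalemxAl.
have c11 := scale_one d2p eT1 tw' tw1.
have c21 := scale_one d2p eT2 tw' tw2.
by move=> i; rewrite eT1 eT2 c11 c21 !scale1r.
Qed.

Lemma mx00 d1 (A B : 'M[algC]_(0 * d1)) : A = B.
Proof. by apply/matrixP => -[k hk]; exfalso; move: hk; rewrite mul0n. Qed.

Unset Implicit Arguments.
Theorem mainTheorem7 (d2 d1 M r : nat) (hM : (1 <= M)%N) (hr : (1 <= r <= d1)%N) :
  (forall rho : 'M[algC]_d1, density rho -> \rank rho = r ->
     exists T : 'I_M -> 'M[algC]_(d2 * d1), extremal_tester T /\ tester_with rho T)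
  \/
  (forall rho : 'M[algC]_d1, density rho -> \rank rho = r ->
     ~ exists T : 'I_M -> 'M[algC]_(d2 * d1), extremal_tester T /\ tester_with rho T).
Proof.
case: d2 => [|d2'].
  left=> rho drho _.
  have tw : tester_with (d2:=0) rho (fun _ : 'I_M => 0).
    by split=> //; split; [move=> i; apply: psd0 | apply: mx00].
  exists (fun _ => 0); split=> //; split; first by exists rho.
  by move=> T1 T2 t _ _ _ _ i; split; apply: mx00.
set d2 := d2'.+1; have d2p : (0 < d2)%N by [].
case: (classic (exists rho0 : 'M[algC]_d1, density rho0 /\ \rank rho0 = r /\
   exists T : 'I_M -> 'M[algC]_(d2 * d1), extremal_tester T /\ tester_with rho0 T)).
  move=> [rho0 [d0 [rk0 [T [eT tT]]]]]; left => rho drho rk.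
  have [S Su hS] := psd_congr d0.1 drho.1 (etrans rk0 (esym rk)).
  have [e t] := transfer d2p Su drho hS eT tT.
  by eexists; split; [exact: e | exact: t].
move=> nex; right => rho drho rk ex; apply: nex; by exists rho.
Qed.
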